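(* Fix a static program and its associated dimension function $\#$. For any expression context $C[\cdot]$ and expressions $e,e'$, if $\#(e)\sqsubseteq\#(e')$ then $\#(C[e])\sqsubseteq\#(C[e'])$.
   Context: Expressions: fix countable sets of variables $\mathbb{X}$, procedure names $\mathbb{F}$, primitive names $\Pi$, handles $\mathbb{H}$, and a set of values $\mathbb{C}$. Expressions are $e ::= x_h \mid c_h \mid [\mathrm{let}_h\,x_1\dots x_n \text{ be } e \text{ in } e] \mid [\mathrm{call}_h\,f\ e_1\dots e_n] \mid [\mathrm{primitive}_h\,\pi\ e_1\dots e_n] \mid [\mathrm{if}_h\,e\in\{c_1,\dots,c_n\}\text{ then } e \text{ else } e] \mid [\mathrm{fork}_h\,f\ e_1\dots e_n] \mid [\mathrm{join}_h\,e] \mid [\mathrm{bundle}_h\,e_1\dots e_n]$ ($n\ge0$), with handles pairwise distinct. An expression context $C[\cdot]$ is an expression with a single hole occurring in a subexpression position (possibly the whole expression). A program consists of a procedure environment (a finite map from procedure names $f$ to formals $x_1\dots x_n$ and a body expression), a primitive environment in which each primitive $\pi$ has an in-dimension $n$ and out-dimension $m$ (written $\pi:_\# n\to m$), and a main expression. Dimension lattice: $\mathbb{N}_\bot^\top=\{\bot,\top\}\cup\{\uparrow n: n\in\mathbb{N}\}$ with the flat order $\bot\sqsubset\uparrow n\sqsubset\top$ (distinct $\uparrow n$ incomparable), join $\sqcup$; $\mathbb{N}_\bot=\mathbb{N}_\bot^\top\setminus\{\top\}$. The relation $e:_\# d$ ($d\in\mathbb{N}_\bot$) and procedure dimensions $f:_\#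 n\to d$ are defined mutually recursively: $x_h:_\#\uparrow1$; $c_h:_\#\uparrow1$; $[\mathrm{bundle}_{h_0}e_1..e_n]:_\#\uparrow n$ if $e_i:_\# d_i$ with $d_i\sqsubseteq\uparrow1$ for all $i$; $[\mathrm{let}_{h_0}x_1..x_n\text{ be }e_1\text{ in }e_2]:_\# d_2$ if $e_1:_\# d_1$, $e_2:_\# d_2$, $d_1\sqsubseteq\uparrow m$ for some $m\ge n$ and $d_2\sqsubset\top$; $[\mathrm{primitive}_{h_0}\pi\,e_1..e_n]:_\#\uparrow m$ if $\pi:_\# n\to m$ and $e_i:_\# d_i\sqsubseteq\uparrow1$ for all $i$; $[\mathrm{call}_{h_0}f\,e_1..e_n]:_\# d$ if $f:_\# n\to d$, $e_i:_\# d_i\sqsubseteq\uparrow1$ for all $i$, and $d\sqsubset\top$; $[\mathrm{if}_{h_0}e_1\in\{c_1..c_n\}\text{ then }e_2\text{ else }e_3]:_\# d$ if $e_j:_\# d_j$ ($j=1,2,3$), $d_1\sqsubseteq\uparrow1$, $d=d_2\sqcup d_3$ and $d\sqsubset\top$; $[\mathrm{fork}_{h_0}f\,e_1..e_n]:_\#\uparrow1$ if $f:_\# n\to d$ with $d\sqsubseteq\uparrow1$ and $e_i:_\# d_i\sqsubseteq\uparrow1$ for all $i$; $[\mathrm{join}_{h_0}e_1]:_\#\uparrow1$ if $e_1:_\# d_1\sqsubseteq\uparrow1$. For each procedure $f$ of the program with formals $x_1..x_n$ and body $b$, $f:_\# n\to d$ where $d$ is the least fixpoint such that $\#(b)=d$.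 Finally $\#:\text{Expressions}\to\mathbb{N}_\bot^\top$ is the total extension of $:_\#$, returning $\top$ where $:_\#$ is undefined. *)

(* Defs.v *)
From mathcomp Require Import all_boot.
Set Implicit Arguments. Unset Strict Implicit. Unset Printing Implicit Defensive.

Inductive dim : Type := DBot | DUp of nat | DTop.

Definition dle (d d' : dim) : bool :=
  match d, d' with
  | DBot, _ => true
  | _, DTop => true
  | DUp n, DUp m => n == m
  | _, _ => false
  end.

Definition dnotTop (d : dim) : bool := if d is DTop then false else true.

Definition dltTop (d : dim) : bool := dnotTop d.

Definition djoin (d d' : dim) : dim :=
  match d, d' with
  | DBot, x => x
  | x, DBot => x
  | DUp n, DUp m => if n == m then DUp n else DTop
  | _, _ => DTop
  end.

Definition dle_up_ge (d : dim) (n : nat) : bool :=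
  match d with DBot => true | DUp m => n <= m | DTop => false end.

Section Lang.
Variables (X F Pi H V : countType).

Inductive expr : Type :=
| EVar    of H & X
| EConst  of H & V
| ELet    of H & seq X & expr & expr
| ECall   of H & F & seq expr
| EPrim   of H & Pi & seq expr
| EIf     of H & expr & seq V & expr & expr
| EFork   of H & F & seq expr
| EJoin   of H & expr
| EBundle of H & seq expr.

Fixpoint handles (e : expr) : seq H :=
  match e with
  | EVar h _ | EConst h _ => [:: h]
  | ELet h _ e1 e2 => h :: handles e1 ++ handles e2
  | ECall h _ es | EPrim h _ es | EFork h _ es | EBundle h es =>
      h :: flatten (map handles es)
  | EIf h e1 _ e2 e3 => h :: handles e1 ++ handles e2 ++ handles e3
  | EJoin h e1 => h :: handles e1
  end.

Definition wf_expr (e : expr) : bool := uniq (handles e).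

Inductive ctx : Type :=
| CHole
| CLet1    of H & seq X & ctx & expr
| CLet2    of H & seq X & expr & ctx
| CCall    of H & F & seq expr & ctx & seq expr
| CPrim    of H & Pi & seq expr & ctx & seq expr
| CIf1     of H & ctx & seq V & expr & expr
| CIf2     of H & expr & seq V & ctx & expr
| CIf3     of H & expr & seq V & expr & ctx
| CFork    of H & F & seq expr & ctx & seq expr
| CJoin    of H & ctx
| CBundle  of H & seq expr & ctx & seq expr.

Fixpoint plug (C : ctx) (e : expr) : expr :=
  match C with
  | CHole => e
  | CLet1 h xs C1 e2 => ELet h xs (plug C1 e) e2
  | CLet2 h xs e1 C2 => ELet h xs e1 (plug C2 e)
  | CCall h f es1 C1 es2 => ECall h f (es1 ++ plug C1 e :: es2)
  | CPrim h p es1 C1 es2 => EPrim h p (es1 ++ plug C1 e :: es2)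
  | CIf1 h C1 cs e2 e3 => EIf h (plug C1 e) cs e2 e3
  | CIf2 h e1 cs C2 e3 => EIf h e1 cs (plug C2 e) e3
  | CIf3 h e1 cs e2 C3 => EIf h e1 cs e2 (plug C3 e)
  | CFork h f es1 C1 es2 => EFork h f (es1 ++ plug C1 e :: es2)
  | CJoin h C1 => EJoin h (plug C1 e)
  | CBundle h es1 C1 es2 => EBundle h (es1 ++ plug C1 e :: es2)
  end.

(* procs f = Some (formals, body) if f is defined; prim p = (in-dim, out-dim) *)
Record program : Type := Program {
  procs : F -> option (seq X * expr);
  prim  : Pi -> nat * nat;
  main  : expr
}.

Definition program_ok (P : program) : Prop :=
  (exists s : seq F, forall f, procs P f <> None -> f \in s) /\
  (forall f xs b, procs P f = Some (xs, b) -> wf_expr b) /\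
  wf_expr (main P).

(* pd f is the d in  f :# n -> d  (n = number of formals of f).
   dimE P pd e is the total extension # (value DTop where :# is undefined). *)
Definition le1 (d : dim) : bool := dle d (DUp 1).

Fixpoint dimE (P : program) (pd : F -> dim) (e : expr) : dim :=
  match e with
  | EVar _ _ => DUp 1
  | EConst _ _ => DUp 1
  | EBundle _ es =>
      if all le1 (map (dimE P pd) es) then DUp (size es) else DTop
  | ELet _ xs e1 e2 =>
      let d1 := dimE P pd e1 in let d2 := dimE P pd e2 in
      if dle_up_ge d1 (size xs) && dltTop d2 then d2 else DTop
  | EPrim _ p es =>
      if (size es == (prim P p).1) && all le1 (map (dimE P pd) es)
      then DUp (prim P p).2 else DTop
  | ECall _ f es =>
      match procs P f with
      | Some (xs, _) =>
          if (size es == size xs) && all le1 (map (dimE P pd) es)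
             && dltTop (pd f)
          then pd f else DTop
      | None => DTop
      end
  | EIf _ e1 _ e2 e3 =>
      let d := djoin (dimE P pd e2) (dimE P pd e3) in
      if le1 (dimE P pd e1) && dltTop d then d else DTop
  | EFork _ f es =>
      match procs P f with
      | Some (xs, _) =>
          if (size es == size xs) && le1 (pd f) && all le1 (map (dimE P pd) es)
          then DUp 1 else DTop
      | None => DTop
      end
  | EJoin _ e1 => if le1 (dimE P pd e1) then DUp 1 else DTop
  end.

(* the operator whose least fixpoint gives the procedure dimensions *)
Definition procOp (P : program) (pd : F -> dim) (f : F) : dim :=
  match procs P f with
  | Some (_, b) => dimE P pd b
  | None => DBot
  end.

Definition pd_le (pd pd' : F -> dim) : Prop := forall f, dle (pd f) (pd' f).

Definition is_proc_dims (P : program) (pd : F -> dim) : Prop :=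
  (forall f, procOp P pd f = pd f) /\
  (forall pd', (forall f, procOp P pd' f = pd' f) -> pd_le pd pd').

End Lang.

(* Main.v *)
Require Import Defs.
From mathcomp Require Import all_boot.

Lemma dle_top d : dle d DTop. Proof. by case: d. Qed.
Lemma dle_refl d : dle d d. Proof. by case: d => //= n; rewrite eqxx. Qed.
Lemma dle_trans a b c : dle a b -> dle b c -> dle a c.
Proof. by case: a => [|n|]; case: b => [|m|]; case: c => [|k|] //= /eqP-> . Qed.

Lemma guard_mono (c c' : bool) x x' : (c' -> c) -> dle x x' ->
  dle (if c then x else DTop) (if c' then x' else DTop).
Proof. case: c' => [H|_ _]; first by rewrite H. by rewrite dle_top. Qed.

Lemma le1_mono {d d'} : dle d d' -> le1 d' -> le1 d.
Proof. rewrite /le1 => H1 H2; exact: dle_trans H1 H2. Qed.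
Lemma ltTop_mono {d d'} : dle d d' -> dltTop d' -> dltTop d.
Proof. by case: d => [|n|]; case: d' => [|m|]. Qed.
Lemma upge_mono {d d'} {n} : dle d d' -> dle_up_ge d' n -> dle_up_ge d n.
Proof. by case: d => [|k|]; case: d' => [|m|] //= /eqP->. Qed.
Lemma djoin_mono {a a' b b'} : dle a a' -> dle b b' -> dle (djoin a b) (djoin a' b').
Proof.
case: a => [|n|]; case: a' => [|n'|]; case: b => [|m|]; case: b' => [|m'|] //=;
 repeat (move/eqP=> ?; subst); rewrite ?dle_refl ?dle_top //;
 repeat (case: eqP => ? //=; subst); rewrite ?eqxx //.
Qed.

Lemma all_mid {T : Type} {f : T -> dim} {es1 es2 a a'} :
  dle (f a) (f a') ->
  all le1 (map f (es1 ++ a' :: es2)) -> all le1 (map f (es1 ++ a :: es2)).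
Proof.
move=> H; rewrite !map_cat !all_cat /= => /andP [-> /andP [/(le1_mono H) -> ->]] //.
Qed.

Theorem mainTheorem3 (X F Pi H V : countType) (P : program X F Pi H V)
  (pd : F -> dim) :
  program_ok P -> is_proc_dims P pd ->
  forall (C : ctx X F Pi H V) (e e' : expr X F Pi H V),
    wf_expr (plug C e) -> wf_expr (plug C e') ->
    dle (dimE P pd e) (dimE P pd e') ->
    dle (dimE P pd (plug C e)) (dimE P pd (plug C e')).
Proof.
move=> _ _ C e e' _ _ He.
elim: C => [|h xs C1 IH e2|h xs e1 C2 IH|h f es1 C1 IH es2|h p es1 C1 IH es2
  |h C1 IH cs e2 e3|h e1 cs C2 IH e3|h e1 cs e2 C3 IH|h f es1 C1 IH es2
  |h C1 IH|h es1 C1 IH es2] //=.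
- apply: guard_mono; last exact: dle_refl.
  by case/andP => /(upge_mono IH) -> ->.
- apply: guard_mono => //. by case/andP => -> /(ltTop_mono IH).
- case: (procs P f) => [[xs b]|]; last exact: dle_refl.
  apply: guard_mono; last exact: dle_refl.
  rewrite !size_cat /=. by case/andP => /andP [-> /(all_mid IH) ->] ->.
- apply: guard_mono; last exact: dle_refl.
  rewrite !size_cat /=. by case/andP => -> /(all_mid IH) ->.
- apply: guard_mono; last exact: dle_refl.
  by case/andP => /(le1_mono IH) -> ->.
- have J := djoin_mono IH (dle_refl (dimE P pd e3)).
  apply: guard_mono => //. by case/andP => -> /(ltTop_mono J).
- have J := djoin_mono (dle_refl (dimE P pd e2)) IH.
  apply: guard_mono => //. by case/andP => -> /(ltTop_mono J).
- case: (procs P f) => [[xs b]|]; last exact: dle_refl.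
  apply: guard_mono; last exact: dle_refl.
  rewrite !size_cat /=. by case/andP => /andP [-> ->] /(all_mid IH) ->.
- apply: guard_mono; last exact: dle_refl. exact: le1_mono.
- rewrite !size_cat /=. apply: guard_mono; last exact: dle_refl. exact: all_mid.
Qed.
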